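(* Let $G$ be a SIN topological group, $X$ a Hausdorff space, $\xi=(E\xrightarrow{p}X)$ a numerable principal $G$-bundle, $C$ an $X$-groupoid with $\Omega_C=C_*^*$ for a base point $*\in X$. Then the topologies on the gauge group $\mathcal G$, on the space $\mathcal R(C,\xi)$ of representations and on $\mathcal R(\Omega_C,G)$ induced by the uniform structures $\mathbf U_{\mathcal G}$, $\mathbf U_{\mathcal R(C,\xi)}$ and $\mathbf U_{\mathcal R}$ coincide with the compact-open topologies (as subspaces of $\mathrm{map}(E,E)$, $\mathrm{map}(C\times_XE,E)$ and $\mathrm{map}(\Omega_C,G)$ respectively).
   Context: SIN: the identity has a fundamental system of conjugation-invariant neighbourhoods. $X$-groupoid: a space $C$ with continuous source/target $\alpha,\beta:C\to X$, continuous associative partial composition on $\{(c_1,c_2):\alpha(c_1)=\beta(c_2)\}$ with $\alpha(c_1c_2)=\alpha(c_2)$, $\beta(c_1c_2)=\beta(c_1)$, continuous units and continuous inversion; $C_x=\alpha^{-1}(x)$, $C^y=\beta^{-1}(y)$. A representation of $C$ on $\xi$: continuous $w:C\times_XE\to E$ (fiber product over $\alpha$, $p$) with $p(w(c,z))=\beta(c)$, $w(cd,z)=w(c,w(d,z))$, $w(c^{-1},w(c,z))=z$, $w(c,zg)=w(c,z)g$. Gauge group $\mathcal G$: $G$-equivariant homeomorphisms $\chi$ of $E$ with $p\chi=p$. $\mathcal R(\Omega_C,G)$: continuous homomorphisms. Let $\gamma:E\times_XE\to G$ be defined by $y=z\gamma(y,z)$ and $\mathcal V_G$ the set of open symmetric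 neighbourhoods of $e$. Fundamental entourages: for $\mathbf U_{\mathcal G}$, $\{(\chi,\tilde\chi):\gamma(\chi(z),\tilde\chi(z))\in V\ \forall z\in p^{-1}(K)\}$ ($K\subset X$ compact); for $\mathbf U_{\mathcal R(C,\xi)}$, $\{(w,\tilde w):\gamma(w(c,z),\tilde w(c,z))\in V\ \forall(c,z)\in L\times_XE\}$ ($L\subset C$ compact); for $\mathbf U_{\mathcal R}$, $\{(h,\tilde h):\tilde h(c)h(c^{-1})\in V\ \forall c\in K\}$ ($K\subset\Omega_C$ compact); always $V\in\mathcal V_G$. *)

(* Defs.v *)
From HB Require Import structures.
From mathcomp Require Import all_boot all_order all_algebra.
From mathcomp Require Import all_classical all_reals all_analysis.
From mathcomp Require Import Rstruct Rstruct_topology.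
Set Implicit Arguments. Unset Strict Implicit. Unset Printing Implicit Defensive.
Import Order.TTheory GRing.Theory Num.Theory.
Local Open Scope classical_set_scope.
Local Open Scope ring_scope.

Definition is_topological_group (G : topologicalType)
  (mul : G -> G -> G) (inv : G -> G) (e : G) : Prop :=
  [/\ (forall a b c, mul (mul a b) c = mul a (mul b c)),
      (forall a, mul e a = a /\ mul a e = a),
      (forall a, mul (inv a) a = e /\ mul a (inv a) = e),
      continuous (fun gh : G * G => mul gh.1 gh.2) &
      continuous inv].

Definition is_SIN (G : topologicalType) (mul : G -> G -> G) (inv : G -> G) (e : G)
  : Prop :=
  forall N, nbhs e N -> exists V, [/\ nbhs e V, V `<=` N &
     forall g h, V h -> V (mul (mul g h) (inv g))].

Definition VG (G : topologicalType) (inv : G -> G) (e : G) : set (set G) :=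
  [set V | [/\ open V, V e & forall g, V g -> V (inv g)]].

(** xi is trivial over U: a G-equivariant homeomorphism U x G ~ p^-1(U) over U,
    given by phi and its inverse z |-> (p z, psi z). *)
Definition trivial_over (G X E : topologicalType) (mul : G -> G -> G)
  (act : E -> G -> E) (p : E -> X) (U : set X) : Prop :=
  exists (phi : X -> G -> E) (psi : E -> G),
  [/\ (forall x g, U x -> p (phi x g) = x) /\
      (forall x g h, U x -> phi x (mul g h) = act (phi x g) h),
      (forall x g, U x -> psi (phi x g) = g),
      (forall z, U (p z) -> phi (p z) (psi z) = z),
      {within [set xg : X * G | U xg.1], continuous (fun xg => phi xg.1 xg.2)} &
      {within p @^-1` U, continuous psi}].

Definition numerably_trivial (G X E : topologicalType) (mul : G -> G -> G)
  (act : E -> G -> E) (p : E -> X) : Prop :=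
  exists (J : choiceType) (u : J -> X -> Rdefinitions.R),
  [/\ (forall j, continuous (u j)),
      (forall j x, 0 <= u j x),
      (forall x : X, exists2 N : set X, nbhs x N &
          finite_set [set j | exists2 y, N y & u j y != 0]),
      (forall x, \sum_(j \in [set j | u j x != 0]) u j x = 1) &
      (forall j, trivial_over mul act p [set x | 0 < u j x])].

Definition numerable_principal_bundle (G X E : topologicalType)
  (mul : G -> G -> G) (e : G) (act : E -> G -> E) (p : E -> X) : Prop :=
  [/\ continuous p /\
      continuous (fun zg : E * G => act zg.1 zg.2),
      (forall z, act z e = z),
      (forall z g h, act (act z g) h = act z (mul g h)),
      (forall z g, p (act z g) = p z) &
      numerably_trivial mul act p].

(** "gamma(y, z) in V", where y = z gamma(y,z) (gamma is unique by freeness) *)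
Definition gamma_in (G E : Type) (act : E -> G -> E) (V : set G) (y z : E) : Prop :=
  exists2 g, V g & y = act z g.

Definition is_X_groupoid (X C : topologicalType) (alpha beta : C -> X)
  (comp : C -> C -> C) (unit : X -> C) (cinv : C -> C) : Prop :=
  [/\ continuous alpha /\ continuous beta,
      {within [set cd : C * C | alpha cd.1 = beta cd.2],
         continuous (fun cd => comp cd.1 cd.2)},
      (forall c d, alpha c = beta d ->
          alpha (comp c d) = alpha d /\ beta (comp c d) = beta c),
      (forall a b c, alpha a = beta b -> alpha b = beta c ->
          comp (comp a b) c = comp a (comp b c)) &
      [/\ [/\ continuous unit, (forall x, alpha (unit x) = x /\ beta (unit x) = x),
          (forall c, comp c (unit (alpha c)) = c) &
          (forall c, comp (unit (beta c)) c = c)] &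
      [/\ continuous cinv,
          (forall c, alpha (cinv c) = beta c /\ beta (cinv c) = alpha c),
          (forall c, comp (cinv c) c = unit (alpha c)) &
          (forall c, comp c (cinv c) = unit (beta c))]]].

Definition fibprod (X C E : Type) (alpha : C -> X) (p : E -> X) : set (C * E) :=
  [set ce | alpha ce.1 = p ce.2].

Definition vertex (X C : Type) (alpha beta : C -> X) (x0 : X) : set C :=
  [set c | alpha c = x0 /\ beta c = x0].

Definition gauge_group (G X E : topologicalType) (act : E -> G -> E) (p : E -> X)
  : set (E -> E) :=
  [set chi | [/\ continuous chi,
     (exists2 chi' : E -> E, continuous chi' & cancel chi chi' /\ cancel chi' chi),
     (forall z g, chi (act z g) = act (chi z) g) &
     (forall z, p (chi z) = p z)]].

Definition representations (G X C E : topologicalType) (act : E -> G -> E)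
  (p : E -> X) (alpha beta : C -> X) (comp : C -> C -> C) (cinv : C -> C)
  : set (set_type (fibprod alpha p) -> E) :=
  let FP := set_type (fibprod alpha p) in
  [set w : FP -> E | [/\ continuous w,
     (forall x : FP, p (w x) = beta (\val x).1),
     (forall x y t : FP, (\val y).2 = w t ->
         \val x = (comp (\val y).1 (\val t).1, (\val t).2) -> w x = w y),
     (forall x y : FP, (\val y).1 = cinv (\val x).1 -> (\val y).2 = w x ->
         w y = (\val x).2) &
     (forall (x y : FP) g, \val y = ((\val x).1, act (\val x).2 g) ->
         w y = act (w x) g)]].

Definition hom_reps (G X C : topologicalType) (mul : G -> G -> G)
  (alpha beta : C -> X) (comp : C -> C -> C) (x0 : X)
  : set (set_type (vertex alpha beta x0) -> G) :=
  let Om := set_type (vertex alpha beta x0) in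
  [set h : Om -> G | continuous h /\
     (forall a b c : Om, \val c = comp (\val a) (\val b) -> h c = mul (h a) (h b))].

Definition ent_gauge (G X E : topologicalType) (inv : G -> G) (e : G)
  (act : E -> G -> E) (p : E -> X) : set (set ((E -> E) * (E -> E))) :=
  [set D | exists (K : set X) V, [/\ compact K, VG inv e V &
     D = [set cc | forall z : E, K (p z) -> gamma_in act V (cc.1 z) (cc.2 z)]]].

Definition ent_rep (G X C E : topologicalType) (inv : G -> G) (e : G)
  (act : E -> G -> E) (p : E -> X) (alpha : C -> X)
  : set (set ((set_type (fibprod alpha p) -> E) * (set_type (fibprod alpha p) -> E))) :=
  [set D | exists (L : set C) V, [/\ compact L, VG inv e V &
     D = [set ww | forall x : set_type (fibprod alpha p), L (\val x).1 -> gamma_in act V (ww.1 x) (ww.2 x)]]].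

Definition ent_hom (G X C : topologicalType) (mul : G -> G -> G) (inv : G -> G)
  (e : G) (alpha beta : C -> X) (cinv : C -> C) (x0 : X)
  : set (set ((set_type (vertex alpha beta x0) -> G) *
              (set_type (vertex alpha beta x0) -> G))) :=
  [set D | exists (K : set (set_type (vertex alpha beta x0))) V,
     [/\ compact K, VG inv e V &
     D = [set hh | forall c c' : set_type (vertex alpha beta x0), K c -> \val c' = cinv (\val c) ->
                                V (mul (hh.2 c) (hh.1 c'))]]].

Definition unif_open (T : Type) (S : set T) (ents : set (set (T * T)))
  (W : set T) : Prop :=
  W `<=` S /\ forall x, W x -> exists2 D, ents D & [set y | S y /\ D (x, y)] `<=` W.

Definition co_open (A B : topologicalType) (S : set (A -> B)) (W : set (A -> B))
  : Prop :=
  exists2 O : set {compact-open, A -> B}, open O & W = O `&` S.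

Arguments representations {G X C E} act p alpha beta comp cinv _.
Arguments hom_reps {G X C} mul alpha beta comp x0 _.
Arguments ent_rep {G X C E} inv e act p alpha _.
Arguments ent_hom {G X C} mul inv e alpha beta cinv x0 _.

(* Main.v *)
Require Import Defs.
From HB Require Import structures.
From mathcomp Require Import all_boot all_order all_algebra.
From mathcomp Require Import all_classical all_reals all_analysis.
From mathcomp Require Import Rstruct Rstruct_topology.
Local Open Scope classical_set_scope.


Section Framework.
Context {A B : topologicalType} (S : set (A -> B)) (ents : set (set ((A -> B) * (A -> B)))).

Lemma framework :
  (exists D, ents D) ->
  (forall f, S f -> forall D1 D2, ents D1 -> ents D2 -> exists2 D3, ents D3 &
     forall g, S g -> D3 (f, g) -> D1 (f, g) /\ D2 (f, g)) ->
  (forall f, S f -> forall D, ents D ->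
     nbhs (f : {compact-open, A -> B}) [set g | S g -> D (f, g)]) ->
  (forall f, S f -> forall (K : set A) (O : set B), compact K -> open O -> f @` K `<=` O ->
     exists2 D, ents D & forall g, S g -> D (f, g) -> g @` K `<=` O) ->
  forall W, W `<=` S -> co_open S W <-> unif_open S ents W.
Proof.
move=> [D0 eD0] dir ha hb W WS; split.
  case=> O oO ->; split; first by move=> ? [].
  move=> f [Of Sf].
  pose Fb : set_system {compact-open, A -> B} := [set P | exists2 D, ents D & [set g | S g /\ D (f, g)] `<=` P].
  have FFb : Filter Fb.
    split.
    - by exists D0.
    - move=> P Q [D1 e1 s1] [D2 e2 s2]; have [D3 e3 h3] := dir f Sf D1 D2 e1 e2.
      by exists D3 => // g [Sg D3g]; have [? ?] := h3 g Sg D3g; split; [apply: s1|apply: s2].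
    - by move=> P Q PQ [D eD sD]; exists D => //; apply: subset_trans PQ.
  have : {compact-open, Fb --> f}.
    apply/compact_open_cvgP => K O' cK oO' fKO.
    have [D eD hD] := hb f Sf K O' cK oO' fKO.
    by exists D => // g [Sg Dg]; apply: hD.
  move=> /(_ O) []; first by apply: open_nbhs_nbhs.
  by move=> D eD sD; exists D => // g [Sg Dg]; split => //; apply: sD.
case=> _ hW.
pose O := \bigcup_(P in [set P : set {compact-open, A -> B} | open P /\ P `&` S `<=` W]) P.
exists O; first by apply: bigcup_open => P [].
rewrite eqEsubset; split.
  move=> f Wf; have [D eD sD] := hW f Wf.
  have := ha f (WS f Wf) D eD; rewrite nbhsE => -[P [oP Pf] PD].
  split; last exact: WS.
  exists P => //; split => // g [Pg Sg]; apply: sD; split => //.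
  exact: PD.
by move=> g [[P [oP PW] Pg] Sg]; apply: PW.
Qed.
End Framework.


Section Grp.
Context {G : topologicalType} {mul : G -> G -> G} {inv : G -> G} {e : G}.
Hypothesis TG : is_topological_group mul inv e.

Lemma mulA a b c : mul (mul a b) c = mul a (mul b c).
Proof. by case: TG. Qed.
Lemma mul1g a : mul e a = a. Proof. by case: TG => _ /(_ a) []. Qed.
Lemma mulg1 a : mul a e = a. Proof. by case: TG => _ /(_ a) []. Qed.
Lemma mulVg a : mul (inv a) a = e. Proof. by case: TG => _ _ /(_ a) []. Qed.
Lemma mulgV a : mul a (inv a) = e. Proof. by case: TG => _ _ /(_ a) []. Qed.
Lemma mul_cont : continuous (fun gh : G * G => mul gh.1 gh.2).
Proof. by case: TG. Qed.
Lemma inv_cont : continuous inv. Proof. by case: TG. Qed.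

Lemma mulKg a b : mul (inv a) (mul a b) = b.
Proof. by rewrite -mulA mulVg mul1g. Qed.
Lemma mulKVg a b : mul a (mul (inv a) b) = b.
Proof. by rewrite -mulA mulgV mul1g. Qed.
Lemma mulgK a b : mul (mul b a) (inv a) = b.
Proof. by rewrite mulA mulgV mulg1. Qed.
Lemma mulgKV a b : mul (mul b (inv a)) a = b.
Proof. by rewrite mulA mulVg mulg1. Qed.
Lemma invK a : inv (inv a) = a.
Proof. by rewrite -[inv (inv a)]mulg1 -(mulVg a) mulKg. Qed.
Lemma inv_uniq x y : mul x y = e -> inv x = y.
Proof. by move=> h; rewrite -(mulKg x y) h mulg1. Qed.
Lemma invM a b : inv (mul a b) = mul (inv b) (inv a).
Proof. by apply: inv_uniq; rewrite mulA -(mulA b) mulgV mul1g mulgV. Qed.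
Lemma inv1 : inv e = e. Proof. by rewrite -[inv e]mul1g mulgV. Qed.
Lemma mul_eq_l a b c : mul a b = mul a c -> b = c.
Proof. by move=> h; rewrite -(mulKg a b) h mulKg. Qed.

Lemma mulr_cont c : continuous (fun z => mul z c).
Proof.
move=> z; apply: (@continuous2_cvg _ _ _ _ _ _ (fun x => x) (fun _ => c) mul z c).
- exact: (mul_cont (z, c)).
- exact: cvg_id.
- exact: cvg_cst.
Qed.
Lemma mull_cont c : continuous (fun z => mul c z).
Proof.
move=> z; apply: (@continuous2_cvg _ _ _ _ _ _ (fun _ => c) (fun x => x) mul c z).
- exact: (mul_cont (c, z)).
- exact: cvg_cst.
- exact: cvg_id.
Qed.

Lemma VG_setT : VG inv e setT.
Proof. by split => //; exact: openT. Qed.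
Lemma VG_I V1 V2 : VG inv e V1 -> VG inv e V2 -> VG inv e (V1 `&` V2).
Proof.
move=> [ oV1 h1 s1 ] [ oV2 h2 s2 ]; split; first exact: openI.
  by split.
by move=> g [/s1 ? /s2 ?]; split.
Qed.
Lemma VG_nbhs V : VG inv e V -> nbhs e V.
Proof. by case=> oV eV _; apply: open_nbhs_nbhs. Qed.

Lemma VG_sub N : nbhs e N -> exists2 V, VG inv e V & V `<=` N.
Proof.
rewrite nbhsE => -[ O [ oO Oe] ON].
exists (O `&` inv @^-1` O).
  split.
  - apply: openI => //; apply: open_comp => // x _; exact: inv_cont.
  - by split => //=; rewrite inv1.
  - by move=> g [ Og Oig]; split => //=; rewrite invK.
by move=> g [/ON].
Qed.

Lemma VG_half N : nbhs e N -> exists2 V, VG inv e V & forall a b, V a -> V b -> N (mul a b).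
Proof.
move=> Ne; have : nbhs (e, e) ((fun gh : G * G => mul gh.1 gh.2) @^-1` N).
  by apply: mul_cont => /=; rewrite mul1g.
case=> -[/= A B] [nA nB] AB.
have [V VV VAB] := VG_sub _ (filterI nA nB).
by exists V => // a b Va Vb; apply: (AB (a, b)); split; case: (VAB _ Va); case: (VAB _ Vb).
Qed.

Lemma SIN_sub (SIN : is_SIN mul inv e) N : nbhs e N ->
  exists V, [/\ nbhs e V, V `<=` N & forall g h, V h -> V (mul (mul g h) (inv g))].
Proof. exact: SIN. Qed.

Lemma open_rtrans (V : set G) y : open V -> open [set z | V (mul z (inv y))].
Proof. move=> oV; apply: (open_comp (f := fun z => mul z (inv y))) => // x _; exact: mulr_cont. Qed.

Lemma closure_rtrans N : nbhs e N -> exists2 V, VG inv e V &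
  forall y, closure [set z | V (mul z (inv y))] `<=` [set z | N (mul z (inv y))].
Proof.
move=> Ne; have [V VV VN] := VG_half _ Ne; exists V => // y z clz.
have [ oV eV sV] := VV.
have : nbhs z [set w | V (mul w (inv z))].
  by apply: open_nbhs_nbhs; split; [exact: open_rtrans|rewrite /= mulgV].
move=> /clz [w [/= Vwy Vwz]].
have -> : mul z (inv y) = mul (inv (mul w (inv z))) (mul w (inv y)).
  by rewrite invM invK mulA mulKg.
by apply: VN => //; apply: sV.
Qed.

End Grp.

Section Tube.
Context {G E : topologicalType} (mul : G -> G -> G) (inv : G -> G) (e : G) (act : E -> G -> E).
Hypothesis TG : is_topological_group mul inv e.
Hypothesis actc : continuous (fun zg : E * G => act zg.1 zg.2).
Hypothesis act1 : forall z, act z e = z.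

Lemma tube (Z : set E) (O : set E) : compact Z -> open O -> Z `<=` O ->
  exists2 V, VG inv e V & forall z g, Z z -> V g -> O (act z g).
Proof.
move=> cZ oO ZO.
have : \forall g \near e, Z `<=` (fun z => O (act z g)).
  move/compact_near_coveringP: cZ; apply => z Zz.
  have : nbhs (z, e) ((fun zg : E * G => act zg.1 zg.2) @^-1` O).
    by apply: actc; apply: open_nbhs_nbhs; split => //=; rewrite act1; exact: ZO.
  by case=> -[/= A B] [nA nB] AB; exists (A, B) => //= -[a b] [/= ? ?]; apply: (AB (a, b)).
move=> /(@VG_sub _ mul inv e TG _) [V VV VO]; exists V => // z g Zz Vg; exact: VO.
Qed.
End Tube.


Lemma within_cont_at {T U : topologicalType} {M : set T} {k : T -> U} {t B} :
  {within M, continuous k} -> M t -> nbhs (k t) B -> nbhs t [set s | M s -> B (k s)].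
Proof.
move=> /subspace_continuousP kc Mt nB; have := kc t Mt B nB.
by rewrite /= nbhs_simpl.
Qed.

Section Gco.
Context {G : topologicalType} (mul : G -> G -> G) (inv : G -> G) (e : G).
Hypothesis TG : is_topological_group mul inv e.

Lemma Gco {T : topologicalType} (M : set T) (k : T -> G) (N : set G)
  (I : Type) (F : set_system I) (Phi : I -> T -> G) :
  Filter F -> compact M -> {within M, continuous k} -> nbhs e N ->
  (forall (M' : set T) (O : set G), compact M' -> M' `<=` M -> open O ->
     k @` M' `<=` O -> F [set i | Phi i @` M' `<=` O]) ->
  F [set i | forall t, M t -> N (mul (Phi i t) (inv (k t)))].
Proof.
move=> FF cM kc Ne hyp.
have [V3 [ oV3 eV3 sV3] V3N] := VG_half TG _ Ne.
have [V2 [ oV2 eV2 sV2] V2cl] := closure_rtrans TG _ ((@VG_nbhs _ inv e V3 (And3 oV3 eV3 sV3))).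
have /compact_near_coveringP/near_covering_withinP cov := cM.
have := cov I F (fun i t => N (mul (Phi i t) (inv (k t)))) FF.
apply => t0 Mt0.
pose A := M `&` [set t | V2 (mul (k t) (inv (k t0)))].
pose M' := M `&` closure A.
have cM' : compact M'.
  by apply: compact_closedI => //; exact: closed_closure.
have kM' : k @` M' `<=` [set z | V3 (mul z (inv (k t0)))].
  move=> _ [t [Mt clt] <-]; apply: (V2cl (k t0)) => B nB.
  have := clt _ (within_cont_at kc Mt nB).
  by case=> s [[Ms Vs] Bs]; exists (k s); split => //; apply: Bs.
have FM' := hyp M' _ cM' (fun t => @proj1 _ _) (open_rtrans TG _ (k t0) oV3) kM'.
have nA : nbhs t0 [set s | M s -> V2 (mul (k s) (inv (k t0)))].
  apply: (within_cont_at (B := [set z | V2 (mul z (inv (k t0)))]) kc Mt0).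
  apply: open_nbhs_nbhs; split; first exact: (open_rtrans TG _ _ oV2).
  by rewrite /= (mulgV TG).
exists ([set s | M s -> V2 (mul (k s) (inv (k t0)))], [set i | Phi i @` M' `<=` [set z | V3 (mul z (inv (k t0)))]]) => //.
move=> [t i] [/= At Bi] Mt.
have M't : M' t by split => //; apply: subset_closure; split => //; exact: At.
have a3 : V3 (mul (Phi i t) (inv (k t0))) by apply: Bi; exists t.
have b3 : V3 (inv (mul (k t) (inv (k t0)))) by apply: sV3; apply: kM'; exists t.
have := V3N _ _ a3 b3.
by rewrite (invM TG) (invK TG) -(mulA TG) (mulgKV TG).
Qed.
End Gco.


Lemma within_into_sub {T U : topologicalType} (A : set U) (M : set T) (s : T -> set_type A) :
  {within M, continuous (fun t => \val (s t))} -> {within M, continuous s}.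
Proof.
move=> h.
exact: (@continuous_comp_initial (set_type A) (subspace M) U set_val (from_subspace M s) h).
Qed.

Lemma base_reg {X : topologicalType} (K U : set X) x : hausdorff_space X ->
  compact K -> K x -> open U -> U x ->
  exists F, [/\ closed F, nbhs x F & K `&` F `<=` U].
Proof.
move=> hX cK Kx oU Ux.
pose A := K `&` ~` U.
have cA : compact A by apply: compact_closedI => //; exact: open_closedC.
pose Fx := filter_from (nbhs x) closure.
have FFx : ProperFilter Fx.
  apply: filter_from_proper; last by move=> ? /nbhs_singleton/subset_closure ?; exists x.
  apply: filter_from_filter; first by exists setT; exact: filterT.
  by move=> P Q Px Qx; exists (P `&` Q); [exact: filterI | exact: closureI].
have cov : \forall W \near powerset_filter_from Fx, A `<=` (fun y => ~ W y).
  move/compact_near_coveringP: cA; apply => y [Ky nUy].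
  have xy : x != y by apply/eqP => xy; apply: nUy; rewrite -xy.
  move: hX; rewrite open_hausdorff => /(_ x y xy) [[P Q] /= [Px Qy] [oP oQ /eqP PQ0]].
  have FxP : Fx (closure P).
    by exists P => //; apply: open_nbhs_nbhs; split => //; exact/set_mem.
  near=> y' W => /= Wy'.
  have : closure P y' by exact: (near (small_set_sub FxP) W).
  move=> /(_ Q) [].
    by apply: open_nbhs_nbhs; split => //; exact: (near (open_nbhs_nbhs (conj oQ (set_mem Qy))) y').
  by move=> z [Pz Qz]; have : (P `&` Q) z by []; rewrite PQ0.
move: cov; rewrite near_powerset_filter_fromP; last first.
  by move=> W1 W2 W12 h y Ay W1y; apply: (h y Ay); exact: W12.
case=> W [N nN NW] AW.
exists (closure N); split; first exact: closed_closure.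
  by apply: filterS nN; exact: subset_closure.
move=> y [Ky clNy]; apply: contrapT => nUy.
by apply: (AW y); [split|apply: NW].
Unshelve. all: by end_near. Qed.


Lemma conj_h {G : topologicalType} {mul : G -> G -> G} {inv : G -> G} {e : G}
  (TG : is_topological_group mul inv e) m k a :
  mul (mul (inv (mul m a)) (inv (mul m (inv k)))) (inv (inv (mul m a))) =
  mul (inv (mul m a)) (mul k a).
Proof.
rewrite (invK TG (mul m a)) (invM TG m (inv k)) (invK TG k) !(mulA TG).
by rewrite (mulKg TG).
Qed.

Lemma inv_nbhs {G : topologicalType} {mul : G -> G -> G} {inv : G -> G} {e : G}
  (TG : is_topological_group mul inv e) N : nbhs e N -> nbhs e (inv @^-1` N).
Proof. by move=> nN; apply: (inv_cont TG); rewrite (inv1 TG). Qed.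

Section Bundle.
Context {G X E : topologicalType} {mul : G -> G -> G} {inv : G -> G} {e : G}
  {act : E -> G -> E} {p : E -> X}.
Hypothesis TG : is_topological_group mul inv e.
Hypothesis NB : numerable_principal_bundle mul e act p.

Lemma p_cont : continuous p. Proof. by case: NB => -[]. Qed.
Lemma act_cont : continuous (fun zg : E * G => act zg.1 zg.2). Proof. by case: NB => -[]. Qed.
Lemma act1 z : act z e = z. Proof. by case: NB. Qed.
Lemma actM z g h : act (act z g) h = act z (mul g h). Proof. by case: NB. Qed.
Lemma p_act z g : p (act z g) = p z. Proof. by case: NB. Qed.

Definition ltriv (U : set X) (phi : X -> G -> E) (psi : E -> G) :=
  [/\ open U, (forall y g, U y -> p (phi y g) = y),
      (forall y g h, U y -> phi y (mul g h) = act (phi y g) h),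
      (forall y g, U y -> psi (phi y g) = g) &
      [/\ (forall z, U (p z) -> phi (p z) (psi z) = z),
          {in [set xg : X * G | U xg.1], continuous (fun xg => phi xg.1 xg.2)} &
          {in p @^-1` U, continuous psi}]].

Lemma ltriv_ex x : exists U phi psi, U x /\ ltriv U phi psi.
Proof.
case: NB => _ _ _ _ [J [u [uc u0 _ u1 utriv]]].
have [j ujx] : exists j, u j x != 0%R.
  apply: contrapT => /forallNP hj.
  have : [set j | u j x != 0%R] = set0.
    by apply/seteqP; split => // j /= /negP; apply; apply/negP => /eqP /(hj j).
  by move/(_ x): u1 => /[swap] ->; rewrite fsbig_set0 => /esym/eqP; rewrite GRing.oner_eq0.
pose U := [set y | (0 < u j y)%R].
have oU : open U by apply: (@open_comp _ _ (u j) [set r | (0 < r)%R]) => // y _; exact: uc.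
have [phi [psi [[pphi phiM] psiphi phipsi phic psic]]] := utriv j.
exists U, phi, psi; split.
  by rewrite /U /= Num.Theory.lt0r ujx u0.
split => //; split => //.
- rewrite -continuous_open_subspace //.
  by apply: (@open_comp _ _ fst) => // xg _; exact: cvg_fst.
- rewrite -continuous_open_subspace //.
  by apply: (@open_comp _ _ p) => // xg _; exact: p_cont.
Qed.

Section Triv.
Context {U : set X} {phi : X -> G -> E} {psi : E -> G} (T : ltriv U phi psi).

Lemma tr_open : open U. Proof. by case: T. Qed.
Lemma tr_p y g : U y -> p (phi y g) = y. Proof. by case: T => _ h *; exact: h. Qed.
Lemma tr_M y g h : U y -> phi y (mul g h) = act (phi y g) h. Proof. by case: T => _ _ hh *; exact: hh. Qed.
Lemma tr_psi y g : U y -> psi (phi y g) = g. Proof. by case: T => _ _ _ hh *; exact: hh. Qed.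
Lemma tr_phipsi z : U (p z) -> phi (p z) (psi z) = z. Proof. by case: T => _ _ _ _ [hh *]; exact: hh. Qed.
Lemma tr_phic y g : U y -> {for (y, g), continuous (fun xg : X * G => phi xg.1 xg.2)}.
Proof. by case: T => _ _ _ _ [_ hh _] Uy; apply: hh; rewrite inE. Qed.
Lemma tr_psic z : U (p z) -> {for z, continuous psi}.
Proof. by case: T => _ _ _ _ [_ _ hh] Uy; apply: hh; rewrite inE. Qed.

Lemma tr_decomp z : U (p z) -> z = act (phi (p z) e) (psi z).
Proof. by move=> Uz; rewrite -tr_M // (mul1g TG) tr_phipsi. Qed.

Lemma tr_psi_act z g : U (p z) -> psi (act z g) = mul (psi z) g.
Proof. by move=> Uz; rewrite -{1}(tr_phipsi _ Uz) -tr_M // tr_psi. Qed.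

Lemma tr_phi_psi z y : U y -> p z = y -> z = phi y (psi z).
Proof. by move=> Uy pz; rewrite -pz tr_phipsi // pz. Qed.

Lemma tr_sec_cont y : U y -> {for y, continuous (fun y => phi y e)}.
Proof.
move=> Uy; apply: (@continuous_comp _ _ _ (fun y => (y, e)) (fun xg : X * G => phi xg.1 xg.2)).
  by apply: cvg_pair; [exact: cvg_id | exact: cvg_cst].
exact: tr_phic.
Qed.

Lemma tr_open_pre (O : set G) : open O -> open (p @^-1` U `&` psi @^-1` O).
Proof.
move=> oO; have oU' : open (p @^-1` U).
  by apply: (@open_comp _ _ p); [move=> ? _; exact: p_cont | exact: tr_open].
apply: (continuous_inP _ oU').1 => // z; rewrite inE => Uz; exact: tr_psic.
Qed.
End Triv.
End Bundle.


Section Part3.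
Context {G : topologicalType} {mul : G -> G -> G} {inv : G -> G} {e : G}.
Hypothesis TG : is_topological_group mul inv e.
Context {X C : topologicalType} (alpha beta : C -> X) (comp : C -> C -> C)
  (unit : X -> C) (cinv : C -> C) (x0 : X).
Hypothesis GP : is_X_groupoid alpha beta comp unit cinv.

Let Om := set_type (vertex alpha beta x0).

Let mkOm (c : C) (h : vertex alpha beta x0 c) : Om := exist _ c (mem_set h).

Lemma vertex_cinv (c : Om) : vertex alpha beta x0 (cinv (\val c)).
Proof.
have [a b] := set_valP c.
case: GP => _ _ _ _ [_ [_ /(_ (\val c)) [h1 h2] _ _]].
by rewrite /vertex /= h1 h2.
Qed.

Lemma hom_inv (h : Om -> G) (c c' : Om) : hom_reps mul alpha beta comp x0 h ->
  \val c' = cinv (\val c) -> h c' = inv (h c).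
Proof.
move=> [_ hom] cc'.
have [[ua ub] _ _ _ [[_ uab ur ul] [_ ci cl cr]]] := GP.
have vu : vertex alpha beta x0 (unit x0) by split; case: (uab x0).
pose u := mkOm _ vu.
have hu : h u = e.
  apply: (mul_eq_l TG (h u)); rewrite (mulg1 TG) -(hom u u u) //=.
  by have [h1 _] := uab x0; have := ur (unit x0); rewrite h1 => ->.
apply/esym/(inv_uniq TG); rewrite -hu -(hom c c' u) //= cc' cr /=.
by have [_ ->] := set_valP c.
Qed.

Let S := hom_reps mul alpha beta comp x0.
Let ents := ent_hom mul inv e alpha beta cinv x0.

Lemma part3 : forall W, W `<=` S -> co_open S W <-> unif_open S ents W.
Proof.
apply: framework.
- by exists [set hh | forall c c' : Om, set0 c -> \val c' = cinv (\val c) -> setT (mul (hh.2 c) (hh.1 c'))]; exists set0, setT; split => //; [exact: compact0|exact: VG_setT].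
- move=> f Sf D1 D2 [K1 [V1 [cK1 VV1 ->]]] [K2 [V2 [cK2 VV2 ->]]].
  exists [set hh | forall c c' : Om, (K1 `|` K2) c -> \val c' = cinv (\val c) -> (V1 `&` V2) (mul (hh.2 c) (hh.1 c'))].
    by exists (K1 `|` K2), (V1 `&` V2); split => //; [exact: compactU|exact: VG_I].
  by move=> g _ /= h; split => c c' Kc cc'; have [] := h c c' _ cc'; by [left|right|].
- move=> f Sf D [K [V [cK VV ->]]].
  have hG : nbhs (f : {compact-open, Om -> G}) [set g | forall t, K t -> V (mul (g t) (inv (f t)))].
    apply: (@Gco _ mul inv e TG Om K f V _ (nbhs (f : {compact-open, Om -> G})) (fun g => g)) => //.
    + by apply: continuous_subspaceT; case: Sf.
    + exact: (VG_nbhs _ VV).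
    + move=> M' O cM' _ oO fMO; apply: open_nbhs_nbhs; split => //.
      exact: compact_open_open.
  apply: filterS hG => g /= hg _ c c' Kc cc'.
  rewrite (hom_inv _ _ _ Sf cc'); exact: hg.
- move=> f Sf K O cK oO fKO.
  have actc : continuous (fun zg : G * G => mul zg.2 zg.1).
    move=> [z g]; apply: (@continuous2_cvg _ _ _ _ _ _ snd fst mul g z).
    + exact: (mul_cont TG (g, z)).
    + exact: cvg_snd.
    + exact: cvg_fst.
  have cfK : compact (f @` K).
    by apply: continuous_compact => //; apply: continuous_subspaceT; case: Sf.
  have [V VV hV] := @tube _ _ mul inv e (fun z g => mul g z) TG actc (mul1g TG) _ _ cfK oO fKO.
  exists [set hh | forall c c' : Om, K c -> \val c' = cinv (\val c) -> V (mul (hh.2 c) (hh.1 c'))].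
    by exists K, V.
  move=> g Sg /= hg _ [c Kc <-].
  pose c' := mkOm _ (vertex_cinv c).
  have := hV (f c) (mul (g c) (f c')) (ex_intro2 _ _ c Kc erefl) (hg c c' Kc (erefl : \val c' = cinv (\val c))).
  by rewrite (hom_inv f c c' Sf (erefl : \val c' = cinv (\val c))) (mulgKV TG).
Qed.
End Part3.


Section Part1.
Context {G X E : topologicalType} {mul : G -> G -> G} {inv : G -> G} {e : G}
  {act : E -> G -> E} {p : E -> X}.
Hypothesis TG : is_topological_group mul inv e.
Hypothesis SIN : is_SIN mul inv e.
Hypothesis hX : hausdorff_space X.
Hypothesis NB : numerable_principal_bundle mul e act p.

Let S := gauge_group act p.
Let ents := ent_gauge inv e act p.

Lemma part1a f K V : S f -> compact K -> VG inv e V ->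
  nbhs (f : {compact-open, E -> E})
    [set g | S g -> forall z, K (p z) -> gamma_in act V (f z) (g z)].
Proof.
move=> Sf cK VV.
have [V0 [nV0 V0V V0c]] := SIN _ (VG_nbhs _ VV).
have [fc _ fact fp] := Sf.
have cov := (near_covering_withinP K).2 ((compact_near_coveringP K).1 cK).
have H : \forall g \near (f : {compact-open, E -> E}),
    K `<=` (fun x => S g -> forall z, p z = x -> gamma_in act V (f z) (g z)).
  apply: (cov _ (nbhs (f : {compact-open, E -> E})) (fun g x => S g -> forall z, p z = x -> gamma_in act V (f z) (g z))) => // x0 Kx0.
  have [U [phi [psi [Ux0 T]]]] := ltriv_ex NB x0.
  have [F0 [clF0 nF0 KF0U]] := @base_reg X K U x0 hX cK Kx0 (tr_open T) Ux0.
  pose M := K `&` F0.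
  have cM : compact M by exact: compact_closedI.
  have MU : M `<=` U := KF0U.
  pose s := fun y => phi y e.
  pose k := fun y => psi (f (s y)).
  have sc : {in (U : set X), continuous s}.
    by move=> y; rewrite inE => Uy; exact: (tr_sec_cont T).
  have fsp y : U y -> p (f (s y)) = y by move=> Uy; rewrite fp (tr_p T).
  have kc : {within M, continuous k}.
    apply: (continuous_subspaceW MU); apply: continuous_in_subspaceT => y; rewrite inE => Uy.
    apply: (@continuous_comp _ _ _ (f \o s) psi).
      apply: continuous_comp; last exact: fc.
      by apply: sc; rewrite inE.
    by apply: (tr_psic T); rewrite /= fsp.
  have HG : nbhs (f : {compact-open, E -> E})
      [set g | forall y, M y -> (inv @^-1` V0) (mul (psi (g (s y))) (inv (k y)))].
    apply: (@Gco _ mul inv e TG X M k _ _ (nbhs (f : {compact-open, E -> E})) (fun g y => psi (g (s y)))) => //.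
      exact: (inv_nbhs TG).
    move=> M' O cM' M'M oO kO.
    have cQ : compact (s @` M').
      apply: continuous_compact => //.
      apply: (continuous_subspaceW (subset_trans M'M MU)).
      exact: continuous_in_subspaceT.
    have oW := tr_open_pre NB T _ oO.
    have : nbhs (f : {compact-open, E -> E}) [set g | g @` (s @` M') `<=` p @^-1` U `&` psi @^-1` O].
      apply: open_nbhs_nbhs; split; first exact: compact_open_open.
      move=> _ [_ [y M'y <-] <-]; have Uy := MU _ (M'M _ M'y).
      by split => /=; [rewrite fsp | apply: kO; exists y].
    apply: filterS => g h _ [y M'y <-].
    by case: (h _ (imageP g (imageP s M'y))).
  exists (F0, [set g | forall y, M y -> (inv @^-1` V0) (mul (psi (g (s y))) (inv (k y)))]) => //.
  move=> [x g] [/= F0x HGg] Kx Sg z pz.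
  have Mx : M x by split.
  have Ux := MU x Mx.
  have [gc _ gact gp] := Sg.
  pose a := psi z; pose m := psi (g (s x)); pose kk := k x.
  have zdec : z = act (s x) a.
    by rewrite /s /a -pz; apply: (tr_decomp TG T); rewrite pz.
  have fsx : f (s x) = phi x kk := tr_phi_psi T _ _ Ux (fsp x Ux).
  have gsx : g (s x) = phi x m.
    by apply: (tr_phi_psi T _ _ Ux); rewrite gp (tr_p T).
  exists (mul (inv (mul m a)) (mul kk a)).
    by apply: V0V; rewrite -(conj_h TG); apply: V0c; exact: HGg x Mx.
  rewrite zdec fact gact fsx gsx -(tr_M T) // -(tr_M T) // -(tr_M T) //.
  by rewrite (mulKVg TG).
by apply: filterS H => g H Sg z Kz; exact: (H _ Kz Sg z erefl).
Qed.

Lemma part1b f (K : set E) (O : set E) : S f -> compact K -> open O -> f @` K `<=` O ->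
  exists2 D, ents D & forall g, S g -> D (f, g) -> g @` K `<=` O.
Proof.
move=> Sf cK oO fKO.
have [fc _ fact fp] := Sf.
have cfK : compact (f @` K).
  by apply: continuous_compact => //; exact: continuous_subspaceT.
have [V VV hV] := @tube _ _ mul inv e act TG (act_cont NB) (act1 NB) _ _ cfK oO fKO.
exists [set cc | forall z, (p @` K) (p z) -> gamma_in act V (cc.1 z) (cc.2 z)].
  exists (p @` K), V; split => //.
  by apply: continuous_compact => //; apply: continuous_subspaceT; exact: (p_cont NB).
move=> g Sg hg _ [z Kz <-].
have [h Vh fz] := hg z (imageP p Kz); rewrite /= in fz.
have -> : g z = act (f z) (inv h) by rewrite fz (actM NB) (mulgV TG) (act1 NB).
by apply: hV; [exists z | case: VV => _ _ sV; exact: sV].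
Qed.

Lemma part1 : forall W, W `<=` S -> co_open S W <-> unif_open S ents W.
Proof.
apply: framework.
- exists [set cc | forall z : E, set0 (p z) -> gamma_in act setT (cc.1 z) (cc.2 z)].
  by exists set0, setT; split => //; [exact: compact0 | exact: VG_setT].
- move=> f Sf D1 D2 [K1 [V1 [cK1 VV1 ->]]] [K2 [V2 [cK2 VV2 ->]]].
  exists [set cc | forall z : E, (K1 `|` K2) (p z) -> gamma_in act (V1 `&` V2) (cc.1 z) (cc.2 z)].
    by exists (K1 `|` K2), (V1 `&` V2); split => //; [exact: compactU | exact: VG_I].
  move=> g _ /= h; split => z Kz.
    by have [a [? ?] ?] := h z (or_introl Kz); exists a.
  by have [a [? ?] ?] := h z (or_intror Kz); exists a.
- move=> f Sf D [K [V [cK VV ->]]]; exact: part1a.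
- move=> f Sf K O cK oO fKO; exact: part1b.
Qed.
End Part1.


Section Part2.
Context {G X E C : topologicalType} {mul : G -> G -> G} {inv : G -> G} {e : G}
  {act : E -> G -> E} {p : E -> X} {alpha beta : C -> X} {comp : C -> C -> C}
  {unit : X -> C} {cinv : C -> C}.
Hypothesis TG : is_topological_group mul inv e.
Hypothesis SIN : is_SIN mul inv e.
Hypothesis hX : hausdorff_space X.
Hypothesis NB : numerable_principal_bundle mul e act p.
Hypothesis GP : is_X_groupoid alpha beta comp unit cinv.

Let FP := set_type (fibprod alpha p).
Let S := representations act p alpha beta comp cinv.
Let ents := ent_rep inv e act p alpha.

Lemma alpha_cont : continuous alpha. Proof. by case: GP => -[]. Qed.
Lemma beta_cont : continuous beta. Proof. by case: GP => -[]. Qed.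

Lemma fst_val_cont : continuous (fun x : FP => (\val x).1).
Proof.
move=> x; apply: (@continuous_comp _ _ _ (set_val : FP -> C * E) fst).
  exact: initial_continuous.
exact: cvg_fst.
Qed.

Lemma part2b f (K : set FP) (O : set E) : S f -> compact K -> open O -> f @` K `<=` O ->
  exists2 D, ents D & forall g, S g -> D (f, g) -> g @` K `<=` O.
Proof.
move=> Sf cK oO fKO.
have [fc _ _ _ _] := Sf.
have cfK : compact (f @` K).
  by apply: continuous_compact => //; exact: continuous_subspaceT.
have [V VV hV] := @tube _ _ mul inv e act TG (act_cont NB) (act1 NB) _ _ cfK oO fKO.
exists [set ww | forall x : FP, ((fun x : FP => (\val x).1) @` K) (\val x).1 -> gamma_in act V (ww.1 x) (ww.2 x)].
  exists ((fun x : FP => (\val x).1) @` K), V; split => //.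
  by apply: continuous_compact => //; apply: continuous_subspaceT; exact: fst_val_cont.
move=> g Sg hg _ [z Kz <-].
have [h Vh fz] := hg z (imageP _ Kz); rewrite /= in fz.
have -> : g z = act (f z) (inv h) by rewrite fz (actM NB) (mulgV TG) (act1 NB).
by apply: hV; [exists z | case: VV => _ _ sV; exact: sV].
Qed.


Lemma part2a f L V : S f -> compact L -> VG inv e V ->
  nbhs (f : {compact-open, FP -> E})
    [set g | S g -> forall x : FP, L (\val x).1 -> gamma_in act V (f x) (g x)].
Proof.
move=> Sf cL VV.
have [V0 [nV0 V0V V0c]] := SIN _ (VG_nbhs _ VV).
have [fc fp _ _ fact] := Sf.
have cov := (near_covering_withinP L).2 ((compact_near_coveringP L).1 cL).
have H : \forall g \near (f : {compact-open, FP -> E}),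
    L `<=` (fun c => S g -> forall x : FP, (\val x).1 = c -> gamma_in act V (f x) (g x)).
  apply: (cov _ (nbhs (f : {compact-open, FP -> E}))
    (fun g c => S g -> forall x : FP, (\val x).1 = c -> gamma_in act V (f x) (g x))) => // c0 Lc0.
  have [U1 [phi1 [psi1 [U1c0 T1]]]] := ltriv_ex NB (alpha c0).
  have [U2 [phi2 [psi2 [U2c0 T2]]]] := ltriv_ex NB (beta c0).
  have cK1 : compact (alpha @` L).
    by apply: continuous_compact => //; apply: continuous_subspaceT; exact: alpha_cont.
  have cK2 : compact (beta @` L).
    by apply: continuous_compact => //; apply: continuous_subspaceT; exact: beta_cont.
  have [F1 [clF1 nF1 KF1U]] :=
    @base_reg X (alpha @` L) U1 (alpha c0) hX cK1 (imageP _ Lc0) (tr_open T1) U1c0.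
  have [F2 [clF2 nF2 KF2U]] :=
    @base_reg X (beta @` L) U2 (beta c0) hX cK2 (imageP _ Lc0) (tr_open T2) U2c0.
  pose M := L `&` (alpha @^-1` F1) `&` (beta @^-1` F2).
  have cM : compact M.
    apply: compact_closedI; first apply: compact_closedI => //.
    - by apply: preimage_closed => // c _; exact: alpha_cont.
    - by apply: preimage_closed => // c _; exact: beta_cont.
  have MU1 c : M c -> U1 (alpha c).
    by case=> -[Lc F1c] _; apply: KF1U; split => //; exists c.
  have MU2 c : M c -> U2 (beta c).
    by case=> -[Lc _] F2c; apply: KF2U; split => //; exists c.
  have mem_sec c : U1 (alpha c) -> (c, phi1 (alpha c) e) \in fibprod alpha p.
    by move=> h; apply: mem_set; rewrite /fibprod /= (tr_p T1).
  pose xd : FP := @exist _ (fun q => q \in fibprod alpha p) _ (mem_sec c0 U1c0).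
  pose sec (c : C) : FP := match pselect (U1 (alpha c)) with
    | left h => @exist _ (fun q => q \in fibprod alpha p) _ (mem_sec c h) | right _ => xd end.
  have secE c : U1 (alpha c) -> \val (sec c) = (c, phi1 (alpha c) e).
    by move=> h; rewrite /sec; case: pselect.
  have secc : {within M, continuous sec}.
    apply: within_into_sub.
    apply: (@subspace_eq_continuous C M _ (from_subspace M (fun c => (c, phi1 (alpha c) e))) (from_subspace M (fun c => \val (sec c)))).
      by move=> c; rewrite inE => Mc; rewrite /from_subspace /= secE //; exact: MU1.
    apply: (@continuous_subspaceW _ _ M (alpha @^-1` U1)); first by move=> c /MU1.
    apply: continuous_in_subspaceT => c; rewrite inE => U1c.
    apply: cvg_pair; first exact: cvg_id.
    apply: (@continuous_comp _ _ _ alpha (fun y => phi1 y e)); first exact: alpha_cont.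
    exact: (tr_sec_cont T1).
  pose k c := psi2 (f (sec c)).
  have fsp c : M c -> p (f (sec c)) = beta c.
    by move=> Mc; rewrite fp secE //; exact: MU1.
  have kc : {within M, continuous k}.
    apply: (@within_continuous_comp _ _ _ M sec (fun x => psi2 (f x))) => //.
    move=> x; rewrite inE => -[c Mc <-]; apply: (@continuous_comp _ _ _ f psi2); first exact: fc.
    by apply: (tr_psic T2); rewrite /= (fsp c Mc); exact: MU2.
  have HG : nbhs (f : {compact-open, FP -> E})
      [set g | forall c, M c -> (inv @^-1` V0) (mul (psi2 (g (sec c))) (inv (k c)))].
    apply: (@Gco _ mul inv e TG C M k _ _ (nbhs (f : {compact-open, FP -> E}))
      (fun g c => psi2 (g (sec c)))) => //.
      exact: (inv_nbhs TG).
    move=> M' O cM' M'M oO kO.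
    have cQ : compact (sec @` M').
      by apply: continuous_compact => //; exact: (continuous_subspaceW M'M).
    have oW := tr_open_pre NB T2 _ oO.
    have : nbhs (f : {compact-open, FP -> E})
        [set g | g @` (sec @` M') `<=` p @^-1` U2 `&` psi2 @^-1` O].
      apply: open_nbhs_nbhs; split; first exact: compact_open_open.
      move=> _ [_ [c M'c <-] <-]; have Mc := M'M _ M'c.
      by split => /=; [rewrite fsp //; exact: MU2 | apply: kO; exists c].
    apply: filterS => g h _ [c M'c <-].
    by case: (h _ (imageP g (imageP sec M'c))).
  have nF : nbhs c0 (alpha @^-1` F1 `&` beta @^-1` F2).
    by apply: filterI; [exact: alpha_cont c0 _ nF1 | exact: beta_cont c0 _ nF2].
  exists (alpha @^-1` F1 `&` beta @^-1` F2,
    [set g | forall c, M c -> (inv @^-1` V0) (mul (psi2 (g (sec c))) (inv (k c)))]) => //.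
  move=> [c g] [/= [F1c F2c] HGg] Lc Sg x xc.
  have Mc : M c by split.
  have U1c := MU1 c Mc; have U2c := MU2 c Mc.
  have [gc gp _ _ gact] := Sg.
  pose z := (\val x).2.
  have pz : p z = alpha c by have := set_valP x; rewrite /fibprod /= xc => ->.
  pose a := psi1 z.
  have xdec : \val x = ((\val (sec c)).1, act (\val (sec c)).2 a).
    rewrite secE //= [LHS]surjective_pairing xc; congr pair.
    by rewrite /a -pz; apply: (tr_decomp TG T1); rewrite pz.
  have fx : f x = act (f (sec c)) a := fact (sec c) x a xdec.
  have gx : g x = act (g (sec c)) a := gact (sec c) x a xdec.
  have fsx : f (sec c) = phi2 (beta c) (k c) := tr_phi_psi T2 _ _ U2c (fsp c Mc).
  have gsx : g (sec c) = phi2 (beta c) (psi2 (g (sec c))).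
    by apply: (tr_phi_psi T2 _ _ U2c); rewrite gp secE.
  pose m := psi2 (g (sec c)); pose kk := k c.
  exists (mul (inv (mul m a)) (mul kk a)).
    by apply: V0V; rewrite -(conj_h TG); apply: V0c; exact: HGg c Mc.
  rewrite fx gx fsx -/kk gsx -/m -(tr_M T2) // -(tr_M T2) // -(tr_M T2) //.
  by rewrite (mulKVg TG).
by apply: filterS H => g H Sg x Lx; exact: (H _ Lx Sg x erefl).
Qed.

Lemma part2 : forall W, W `<=` S -> co_open S W <-> unif_open S ents W.
Proof.
apply: framework.
- exists [set ww | forall x : FP, set0 (\val x).1 -> gamma_in act setT (ww.1 x) (ww.2 x)].
  by exists set0, setT; split => //; [exact: compact0 | exact: VG_setT].
- move=> f Sf D1 D2 [K1 [V1 [cK1 VV1 ->]]] [K2 [V2 [cK2 VV2 ->]]].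
  exists [set ww | forall x : FP, (K1 `|` K2) (\val x).1 -> gamma_in act (V1 `&` V2) (ww.1 x) (ww.2 x)].
    by exists (K1 `|` K2), (V1 `&` V2); split => //; [exact: compactU | exact: VG_I].
  move=> g _ /= h; split => z Kz.
    by have [a [? ?] ?] := h z (or_introl Kz); exists a.
  by have [a [? ?] ?] := h z (or_intror Kz); exists a.
- move=> f Sf D [K [V [cK VV ->]]]; exact: part2a.
- move=> f Sf K O cK oO fKO; exact: part2b.
Qed.

End Part2.


Theorem proposition3p5
  (G : topologicalType) (mul : G -> G -> G) (inv : G -> G) (e : G)
  (X E : topologicalType) (act : E -> G -> E) (p : E -> X)
  (C : topologicalType) (alpha beta : C -> X) (comp : C -> C -> C)
  (unit : X -> C) (cinv : C -> C) (x0 : X) :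
  is_topological_group mul inv e ->
  is_SIN mul inv e ->
  hausdorff_space X ->
  numerable_principal_bundle mul e act p ->
  is_X_groupoid alpha beta comp unit cinv ->
  [/\ (forall W, W `<=` gauge_group act p ->
         co_open (gauge_group act p) W <->
         unif_open (gauge_group act p) (ent_gauge inv e act p) W),
      (forall W, W `<=` representations act p alpha beta comp cinv ->
         co_open (representations act p alpha beta comp cinv) W <->
         unif_open (representations act p alpha beta comp cinv)
                   (ent_rep inv e act p alpha) W) &
      (forall W, W `<=` hom_reps mul alpha beta comp x0 ->
         co_open (hom_reps mul alpha beta comp x0) W <->
         unif_open (hom_reps mul alpha beta comp x0)
                   (ent_hom mul inv e alpha beta cinv x0) W)].
Proof.
move=> TG SIN hX NB GP; split.
- exact: (part1 TG SIN hX NB).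
- exact: (part2 TG SIN hX NB GP).
- exact: (part3 TG _ _ _ _ _ x0 GP).
Qed.
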